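(* For $\tau\in(0,\tfrac1{3\sqrt3})$ and all $t\in\mathbb{R}$, $2\tau=y_\tau(t)\sqrt{1-y_\tau(t)}\,\cos\big(\psi_1(t)+2\psi_2(t)\big)$; moreover $\psi_1(t)+2\psi_2(t)\in(-\tfrac\pi2,\tfrac\pi2)$ for all $t$, and $\psi_1(p_\tau)+2\psi_2(p_\tau)=0$.
   Context: $y_\tau$ solves $\ddot y=-2y(3y-2)$, $y(0)=y_{\max}$, $\dot y(0)=0$, where $y_{\max}$ is the largest root of $y^3-y^2+4\tau^2$; it satisfies $\dot y^2=-4(y^3-y^2+4\tau^2)$, is even, and is periodic of period $2p_\tau$, attaining its minimum at $t=p_\tau$. $\psi_1,\psi_2$ solve $(1-y_\tau)\dot\psi_1=2\tau$, $y_\tau\dot\psi_2=-2\tau$, $\psi_1(0)=\psi_2(0)=0$. *)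

(* Defs.v *)
From Stdlib Require Import Reals.
From Coquelicot Require Import Coquelicot.
Open Scope R_scope.

(* The cubic whose largest root is y_max. *)
Definition cubic (tau y : R) : R := y ^ 3 - y ^ 2 + 4 * tau ^ 2.

Definition is_y_tau (tau : R) (y dy : R -> R) : Prop :=
  (forall t, is_derive y t (dy t)) /\
  (forall t, is_derive dy t (-2 * y t * (3 * y t - 2))) /\
  cubic tau (y 0) = 0 /\
  (forall z, cubic tau z = 0 -> z <= y 0) /\
  dy 0 = 0.

Definition is_period (y : R -> R) (q : R) : Prop := forall t, y (t + q) = y t.

Definition is_half_period (y : R -> R) (p : R) : Prop :=
  0 < p /\ is_period y (2 * p) /\
  (forall q, 0 < q < 2 * p -> ~ is_period y q) /\
  (forall t, y p <= y t).

Definition is_psi1 (tau : R) (y psi1 : R -> R) : Prop :=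
  (forall t, exists d, is_derive psi1 t d /\ (1 - y t) * d = 2 * tau) /\
  psi1 0 = 0.

Definition is_psi2 (tau : R) (y psi2 : R -> R) : Prop :=
  (forall t, exists d, is_derive psi2 t d /\ y t * d = - 2 * tau) /\
  psi2 0 = 0.

(* Main.v *)
Require Import Defs.
From Stdlib Require Import Reals Lra Psatz.
From Coquelicot Require Import Coquelicot.
Open Scope R_scope.

Lemma const_of_deriv (f : R -> R) :
  (forall t, is_derive f t 0) -> forall t, f t = f 0.
Proof.
  intros H t.
  destruct (Rtotal_order t 0) as [Hl|[He|Hg]].
  - apply (eq_is_derive f t 0); [intros; apply H | exact Hl].
  - now subst.
  - symmetry; apply (eq_is_derive f 0 t); [intros; apply H | exact Hg].
Qed.

Lemma is_derive_eq (f : R -> R) x l l' : is_derive f x l -> l = l' -> is_derive f x l'.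
Proof. intros H ->; exact H. Qed.

Lemma cont_of_deriv (f df : R -> R) :
  (forall t, is_derive f t (df t)) -> continuity f.
Proof.
  intros H x. apply continuity_pt_filterlim.
  apply (ex_derive_continuous f x). exists (df x). apply H.
Qed.

Lemma cubic_root_big tau : 0 < tau < 1 / (3 * sqrt 3) ->
  exists z, 2/3 <= z <= 1 /\ cubic tau z = 0.
Proof.
  intros [H1 H2].
  assert (Hs : sqrt 3 * sqrt 3 = 3) by (apply sqrt_sqrt; lra).
  assert (Hs0 : 0 < sqrt 3) by (apply sqrt_lt_R0; lra).
  assert (Ht : tau * (3 * sqrt 3) < 1).
  { apply Rmult_lt_reg_r with (/ (3 * sqrt 3)).
    - apply Rinv_0_lt_compat; nra.
    - rewrite Rmult_assoc, Rinv_r by nra. lra. }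
  assert (Ht2 : 27 * tau ^ 2 < 1) by nra.
  destruct (IVT (cubic tau) (2/3) 1) as [z [Hz1 Hz2]].
  - apply (cont_of_deriv _ (fun y => 3 * y ^ 2 - 2 * y)).
    intros t. unfold cubic. auto_derive; [exact I | ring].
  - lra.
  - unfold cubic. nra.
  - unfold cubic. nra.
  - exists z; split; [lra | exact Hz2].
Qed.

Theorem mainTheorem7 (tau : R) (y dy psi1 psi2 : R -> R) (p : R) :
  0 < tau < 1 / (3 * sqrt 3) ->
  is_y_tau tau y dy ->
  is_half_period y p ->
  is_psi1 tau y psi1 ->
  is_psi2 tau y psi2 ->
  (forall t : R,
     2 * tau = y t * sqrt (1 - y t) * cos (psi1 t + 2 * psi2 t)) /\
  (forall t : R,
     - (PI / 2) < psi1 t + 2 * psi2 t < PI / 2) /\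
  psi1 p + 2 * psi2 p = 0.
Proof.
  intros Htau [Hy [Hdy [Hc0 [Hmax Hd0]]]] [Hp [_ [_ Hmin]]] [Hps1 Hps10] [Hps2 Hps20].
  assert (Htp : 0 < tau) by lra.
  assert (HE : forall t, dy t ^ 2 + 4 * (y t ^ 3 - y t ^ 2) = - 16 * tau ^ 2).
  { intros t.
    assert (Hk := const_of_deriv (fun t => dy t ^ 2 + 4 * (y t ^ 3 - y t ^ 2))).
    rewrite Hk.
    - rewrite Hd0. unfold cubic in Hc0. nra.
    - intros s.
      eapply is_derive_eq.
      + apply (@is_derive_plus R_AbsRing R_NormedModule (fun t => dy t ^ 2) (fun t => 4 * (y t ^ 3 - y t ^ 2))).
        * apply is_derive_pow, Hdy.
        * apply is_derive_scal.
          apply (@is_derive_minus R_AbsRing R_NormedModule (fun t => y t ^ 3) (fun t => y t ^ 2));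
          apply is_derive_pow, Hy.
      + unfold plus, minus, opp; simpl; unfold plus; simpl. ring. }
  assert (Hth : forall t, psi1 t + 2 * psi2 t + atan (dy t / (4 * tau)) = 0).
  { intros t.
    assert (Hk := const_of_deriv (fun t => psi1 t + 2 * psi2 t + atan (dy t / (4 * tau)))).
    rewrite Hk.
    - rewrite Hps10, Hps20, Hd0. unfold Rdiv. rewrite Rmult_0_l, atan_0. ring.
    - intros s.
      destruct (Hps1 s) as [d1 [Hd1 Ed1]].
      destruct (Hps2 s) as [d2 [Hd2 Ed2]].
      assert (Hy1 : 1 - y s <> 0) by (intro Hz; rewrite Hz in Ed1; lra).
      assert (Hy0 : y s <> 0) by (intro Hz; rewrite Hz in Ed2; lra).
      assert (Hq : is_derive (fun t : R => dy t / (4 * tau)) s (/ (4 * tau) * (-2 * y s * (3 * y s - 2)))).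
      { apply (is_derive_ext (fun t : R => / (4 * tau) * dy t) (fun t : R => dy t / (4 * tau))).
        - intros u. unfold Rdiv. apply Rmult_comm.
        - apply is_derive_scal, Hdy. }
      eapply is_derive_eq.
      + apply (@is_derive_plus R_AbsRing R_NormedModule (fun t => psi1 t + 2 * psi2 t) (fun t => atan (dy t / (4 * tau)))).
        * apply (@is_derive_plus R_AbsRing R_NormedModule psi1 (fun t => 2 * psi2 t)).
          -- exact Hd1.
          -- apply is_derive_scal; exact Hd2.
        * apply (is_derive_comp atan (fun t => dy t / (4 * tau))).
          -- apply is_derive_Reals, derivable_pt_lim_atan.
          -- exact Hq.
      + unfold plus, scal; simpl. unfold mult; simpl.
        assert (E1 : 1 + dy s / (4 * tau) * (dy s / (4 * tau) * 1) = y s ^ 2 * (1 - y s) / (4 * tau ^ 2)).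
        { specialize (HE s). replace (y s ^ 2 * (1 - y s)) with ((dy s ^ 2 + 16 * tau ^ 2) / 4) by nra.
          field. lra. }
        rewrite E1.
        assert (D1 : @eq R d1 (2 * tau / (1 - y s))) by (apply (Rmult_eq_reg_l (1 - y s)); [rewrite Ed1; field|]; exact Hy1).
        assert (D2 : @eq R d2 (- 2 * tau / y s)) by (apply (Rmult_eq_reg_l (y s)); [rewrite Ed2; field|]; exact Hy0).
        rewrite D1, D2. field. repeat split; try lra; auto. }
  assert (Hy00 : 0 < y 0).
  { destruct (cubic_root_big tau Htau) as [z [Hz Hcz]].
    specialize (Hmax z Hcz). lra. }
  assert (Hne : forall t, y t <> 0).
  { intros t Hz. destruct (Hps2 t) as [d [_ Ed]]. rewrite Hz in Ed. lra. }
  assert (Hcy : continuity y) by exact (cont_of_deriv y dy Hy).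
  assert (Hpos : forall t, 0 < y t).
  { intros t. destruct (Rlt_le_dec 0 (y t)) as [H|H]; [exact H|].
    assert (Hlt : y t < 0) by (destruct H; [exact H| exfalso; apply (Hne t); exact H]).
    exfalso.
    destruct (Rtotal_order t 0) as [Hl|[He|Hg]].
    - destruct (IVT y t 0 Hcy Hl Hlt Hy00) as [z [_ Hz]]. exact (Hne z Hz).
    - subst; lra.
    - destruct (IVT (fun u => - y u) 0 t (continuity_opp _ Hcy) Hg) as [z [_ Hz]].
      + lra.
      + lra.
      + apply (Hne z); lra. }
  assert (Hlt1 : forall t, 0 < 1 - y t).
  { intros t. specialize (HE t). specialize (Hpos t).
    assert (0 < y t ^ 2 * (1 - y t)) by nra. nra. }
  assert (Hdp : dy p = 0).
  { assert (pr : derivable_pt y p).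
    { exists (dy p). apply is_derive_Reals, Hy. }
    rewrite <- (deriv_minimum y (p - 1) (p + 1) p pr); [| lra | lra | intros; apply Hmin].
    symmetry. apply derive_pt_eq_0. apply is_derive_Reals, Hy. }
  split; [|split].
  - intros t.
    replace (psi1 t + 2 * psi2 t) with (- atan (dy t / (4 * tau))) by (specialize (Hth t); lra).
    rewrite cos_neg, cos_atan.
    specialize (Hpos t). specialize (Hlt1 t). specialize (HE t).
    set (r := sqrt (1 - y t)).
    assert (Hr : r * r = 1 - y t) by (apply sqrt_sqrt; lra).
    assert (Hr0 : 0 < r) by (apply sqrt_lt_R0; lra).
    assert (Hsq : sqrt (1 + (dy t / (4 * tau))²) = y t * r / (2 * tau)).
    { rewrite <- (sqrt_pow2 (y t * r / (2 * tau))).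
      - f_equal. unfold Rsqr.
        replace (dy t / (4 * tau) * (dy t / (4 * tau))) with ((dy t) ^ 2 / (16 * tau ^ 2)) by (field; lra).
        replace (dy t ^ 2) with (4 * y t ^ 2 * (r * r) - 16 * tau ^ 2) by (rewrite Hr; nra).
        field. lra.
      - apply Rlt_le. apply Rdiv_lt_0_compat; nra. }
    rewrite Hsq. field. split; lra.
  - intros t.
    replace (psi1 t + 2 * psi2 t) with (- atan (dy t / (4 * tau))) by (specialize (Hth t); lra).
    destruct (atan_bound (dy t / (4 * tau))). lra.
  - specialize (Hth p). rewrite Hdp in Hth. unfold Rdiv in Hth.
    rewrite Rmult_0_l, atan_0 in Hth. lra.
Qed.
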